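(* Let $A \in \mathbb{R}^{n\times d}$, $b \in \mathbb{R}^n$, and suppose $Ax=b$ admits a solution $x^*$ (not necessarily unique). Let $w$ be a random variable in $\mathbb{R}^n$, $\mathcal{N}(w) = \mathrm{span}\lbrace z \in \mathbb{R}^d : \mathbb{P}[z'A'w = 0]=1\rbrace$, $\mathcal{R}(w) = \mathcal{N}(w)^\perp$, and let $\mathcal{V}(w)$ be the subspace with $\mathcal{V}(w) \perp \mathcal{R}(w)$ and $\mathcal{V}(w) \oplus \mathcal{R}(w) = \mathrm{row}(A)$. Let $w_0,w_1,\ldots$ be random variables in $\mathbb{R}^n$ with $\mathbb{P}[A'w_l \in \mathcal{R}(w)]=1$ for all $l$, let $T = \min\lbrace k\geq 0 : \mathrm{span}\lbrace A'w_0,\ldots,A'w_k\rbrace \supset \mathcal{R}(w)\rbrace$, let $x_0\in\mathbb{R}^d$ be arbitrary, $S_0 = I_d$, and for $l\geq 0$ $$x_{l+1} = \begin{cases} x_l + \dfrac{S_l A' w_l w_l'(b - A x_l)}{w_l' A S_l A' w_l} & S_l A'w_l \neq 0,\\ x_l & \text{otherwise,}\end{cases}\qquad S_{l+1} = \begin{cases} S_l - \dfrac{S_l A' w_l w_l' A S_l}{w_l' A S_l A' w_l} & S_l A' w_l \neq 0,\\ S_l & \text{otherwise.}\end{cases}$$ Then, almost surely on the event $\lbrace T < \infty\rbrace$, $Ax_{T+1} = b$ if and only if $P_{\mathcal{V}(w)} x_0 = P_{\mathcal{V}(w)} x^*$.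
   Context: $P_W$ denotes orthogonal projection onto subspace $W$; $\mathrm{row}(A)$ is the row space of $A$ (a subspace of $\mathbb{R}^d$); $A'$ is the transpose. *)

(* Defs.v *)
From HB Require Import structures.
From mathcomp Require Import all_boot all_order all_algebra.
From mathcomp Require Import all_classical all_reals all_analysis.
Set Implicit Arguments. Unset Strict Implicit. Unset Printing Implicit Defensive.
Import Order.TTheory GRing.Theory Num.Theory.
Local Open Scope ring_scope.

(* Vectors of R^d are column vectors 'cV_d; subspaces of R^d are represented
   (as in mxalgebra) by the row space of a matrix whose rows lie in 'rV_d,
   so a column vector y belongs to the subspace U iff (y^T <= U)%MS. *)

Section Defs.
Variables (R : realType) (n d : nat).

Definition rk_step (A : 'M[R]_(n, d)) (b : 'cV[R]_n)
    (xS : 'cV[R]_d * 'M[R]_d) (w : 'cV[R]_n) : 'cV[R]_d * 'M[R]_d :=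
  let x := xS.1 in let S := xS.2 in
  let v := S *m A^T *m w in
  if v == 0 then (x, S) else
  let den := (w^T *m A *m S *m A^T *m w) 0 0 in
  (x + den^-1 *: (v *m w^T *m (b - A *m x)),
   S - den^-1 *: (v *m w^T *m A *m S)).

Fixpoint rk_iter (A : 'M[R]_(n, d)) (b : 'cV[R]_n) (x0 : 'cV[R]_d)
    (ws : nat -> 'cV[R]_n) (l : nat) : 'cV[R]_d * 'M[R]_d :=
  match l with
  | 0 => (x0, 1%:M)
  | l'.+1 => rk_step A b (rk_iter A b x0 ws l') (ws l')
  end.

Definition orthproj (V : 'M[R]_d) (x : 'cV[R]_d) : 'cV[R]_d :=
  let B := row_base V in (B^T *m invmx (B *m B^T) *m B) *m x.

Definition span_upto (A : 'M[R]_(n, d)) (ws : nat -> 'cV[R]_n) (k : nat)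
  : 'M[R]_(k.+1, d) :=
  \matrix_(i < k.+1) (A^T *m ws i)^T.

End Defs.

(* Main.v *)
Require Import Defs.
From HB Require Import structures.
From mathcomp Require Import all_boot all_order all_algebra.
From mathcomp Require Import all_classical all_reals all_analysis.
From mathcomp Require Import measurable_realfun.
Import Order.TTheory GRing.Theory Num.Theory.
Local Open Scope ring_scope.
Local Open Scope classical_set_scope.

Set Implicit Arguments. Unset Strict Implicit.

Lemma sos_row {R : realType} d (p : 'rV[R]_d) : p *m p^T = 0 -> p = 0.
Proof.
move=> h; have h0 : \sum_(j < d) (p 0 j) ^+ 2 = 0.
  have := congr1 (fun M : 'M[R]_1 => M 0 0) h; rewrite /= [RHS]mxE mxE => h1.
  rewrite -[RHS]h1; apply: eq_bigr => j _; rewrite mxE expr2 //.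
apply/matrixP => i j; rewrite ord1 mxE.
have := @psumr_eq0P R _ xpredT (fun j => (p 0 j) ^+ 2) (fun j _ => sqr_ge0 (p 0 j)) h0 j isT.
by move/eqP; rewrite sqrf_eq0 => /eqP.
Qed.

Lemma sos_col {R : realType} d (q : 'cV[R]_d) : q^T *m q = 0 -> q = 0.
Proof.
by move=> h; apply: trmx_inj; rewrite trmx0; apply: sos_row; rewrite trmxK.
Qed.

Lemma orthproj0 {R : realType} d (V : 'M[R]_d) (y : 'cV[R]_d) : orthproj V y = 0 <-> V *m y = 0.
Proof.
rewrite /orthproj; set B := row_base V; set K := B *m B^T.
have Ku : K \in unitmx.
  rewrite -row_free_unit -kermx_eq0 -submx0; apply/row_subP => i.
  set r := row i (kermx K).
  have rK : r *m K = 0 by apply/sub_kermxP; exact: row_sub.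
  have rB : r *m B = 0.
    apply: sos_row; rewrite trmx_mul mulmxA -(mulmxA r) -/K rK mul0mx //.
  have hk : kermx B = 0 by apply/eqP; rewrite kermx_eq0 row_base_free.
  by rewrite -hk; apply/sub_kermxP.
split.
  move=> h.
  have hB : B *m y = 0.
    have := congr1 (mulmx B) h; rewrite mulmx0 !mulmxA -/K mulmxV // mul1mx.
    by [].
  have /submxP [D ->] : (V <= B)%MS by rewrite eq_row_base.
  by rewrite -mulmxA hB mulmx0.
move=> h.
have /submxP [D hD] : (B <= V)%MS by rewrite eq_row_base.
rewrite -mulmxA; have -> : B *m y = 0 by rewrite hD -mulmxA h mulmx0.
by rewrite mulmx0.
Qed.


Definition Sp {R : realType} n d (A : 'M[R]_(n,d)) (ws : nat -> 'cV[R]_n) l : 'M[R]_(l, d) :=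
  \matrix_(i < l) (A^T *m ws i)^T.

Lemma Sp_row {R : realType} n d (A : 'M[R]_(n,d)) ws l (e : 'cV[R]_d) j :
  Sp A ws l *m e = 0 -> (j < l)%N -> (A^T *m ws j)^T *m e = 0.
Proof.
move=> h hj; have := congr1 (row (Ordinal hj)) h.
by rewrite row_mul rowK row0.
Qed.

Lemma Sp_S {R : realType} n d (A : 'M[R]_(n,d)) ws l : (Sp A ws l <= Sp A ws l.+1)%MS.
Proof.
apply/row_subP => i; rewrite rowK.
have <- : row (widen_ord (leqnSn l) i) (Sp A ws l.+1) = (A^T *m ws i)^T by rewrite rowK.
exact: row_sub.
Qed.

Lemma Sp_last {R : realType} n d (A : 'M[R]_(n,d)) ws l : ((A^T *m ws l)^T <= Sp A ws l.+1)%MS.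
Proof.
have <- : row ord_max (Sp A ws l.+1) = (A^T *m ws l)^T by rewrite rowK.
exact: row_sub.
Qed.

Lemma inv_all {R : realType} n d (A : 'M[R]_(n,d)) b xstar ws x0 (hb : A *m xstar = b) l :
  let xS := rk_iter A b x0 ws l in
  [/\ xS.2^T = xS.2 /\ xS.2 *m xS.2 = xS.2,
      (forall j, (j < l)%N -> xS.2 *m (A^T *m ws j) = 0),
      Sp A ws l *m (xstar - xS.1) = 0,
      ((xS.1 - x0)^T <= Sp A ws l)%MS &
      (1%:M - xS.2 <= Sp A ws l)%MS].
Proof.
elim: l => [|l IH] /=.
  split => //.
  - by rewrite trmx1 mulmx1.
  - exact: flatmx0.
  - by rewrite subrr trmx0 sub0mx.
  - by rewrite subrr sub0mx.
move: IH; case: (rk_iter A b x0 ws l) => [x S] /= [[hS1 hS2] hS3 hS4 hS5 hS6].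
set u := A^T *m ws l.
have SS : (Sp A ws l <= Sp A ws l.+1)%MS := Sp_S A ws l.
have hu : (u^T <= Sp A ws l.+1)%MS := Sp_last A ws l.
rewrite /rk_step /=.
have hvu : S *m A^T *m ws l = S *m u by rewrite /u mulmxA.
rewrite hvu.
have eS : (1%:M - S) *m (xstar - x) = 0.
  have /submxP [D ->] := hS6; by rewrite -mulmxA hS4 mulmx0.
case: eqP => [v0|/eqP vn0] /=.
  split => //.
  - move=> j; rewrite ltnS leq_eqVlt => /orP [/eqP ->|hj]; first exact: v0.
    exact: hS3.
  - apply/row_matrixP => i; rewrite row_mul rowK row0.
    have [hi|hi] := ltnP i l.
      have := Sp_row hS4 hi; by [].
    have -> : nat_of_ord i = l by apply/eqP; rewrite eqn_leq hi -ltnS ltn_ord.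
    rewrite -/u.
    have -> : xstar - x = S *m (xstar - x) by
      apply/eqP; rewrite -subr_eq0 -{1}(mul1mx (xstar - x)) -mulmxBl eS.
    by rewrite mulmxA -[S in u^T *m S]hS1 -trmx_mul v0 trmx0 mul0mx.
  - exact: submx_trans hS5 SS.
  - exact: submx_trans hS6 SS.
set w := ws l; set v := S *m u.
have ewAS : w^T *m A *m S = v^T by rewrite /v trmx_mul hS1 /u trmx_mul trmxK.
have vT : v^T = u^T *m S by rewrite /v trmx_mul hS1.
have Sv : S *m v = v by rewrite /v mulmxA hS2.
have vS : v^T *m S = v^T by rewrite -{1}hS1 -trmx_mul Sv.
set den := (w^T *m A *m S *m A^T *m w) 0 0.
have vu : v^T *m u = den%:M.
  rewrite /den -ewAS -!mulmxA; exact: mx11_scalar.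
have uv : u^T *m v = den%:M.
  by have := congr1 trmx vu; rewrite trmx_mul trmxK tr_scalar_mx.
have vv : v^T *m v = den%:M by rewrite -vu {2}/v mulmxA vS.
have dn0 : den != 0.
  apply/eqP => d0; move/eqP: vn0; apply; apply: sos_col; by rewrite vv d0 raddf0.
have eS' : v *m w^T *m A *m S = v *m v^T by rewrite -ewAS !mulmxA.
have ex : v *m w^T *m (b - A *m x) = v *m (u^T *m (xstar - x)).
  by rewrite -hb -mulmxBr /u trmx_mul trmxK !mulmxA.
rewrite eS' ex.
set c := den^-1.
have cd : c * den = 1 by rewrite mulVf.
have Vv : v *m v^T *m v = den *: v by rewrite -mulmxA vv mul_mx_scalar.
have vsub : (v^T <= Sp A ws l.+1)%MS.
  have -> : v^T = u^T - u^T *m (1%:M - S) by rewrite mulmxBr mulmx1 opprB addrC subrK vT.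
  apply: addmx_sub => //; rewrite eqmx_opp.
  exact: submx_trans (submxMl _ _) (submx_trans hS6 SS).
split.
- split.
    by rewrite linearB linearZ /= trmx_mul trmxK hS1.
  rewrite mulmxBl !mulmxBr hS2 -!scalemxAl -!scalemxAr.
  rewrite (mulmxA S v) Sv -(mulmxA v v^T S) vS (mulmxA (v *m v^T)) Vv -scalemxAl.
  by rewrite !scalerA -mulrA cd mulr1 subrr subr0.
- move=> j; rewrite ltnS leq_eqVlt => /orP [/eqP ->|hj].
    rewrite -/w -/u mulmxBl -scalemxAl -mulmxA vu mul_mx_scalar scalerA cd scale1r.
    by rewrite subrr.
  have h2 : v^T *m (A^T *m ws j) = 0 by rewrite vT -mulmxA (hS3 j hj) mulmx0.
  rewrite mulmxBl [X in X - _](_ : _ = 0); last exact: (hS3 j hj).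
  rewrite -scalemxAl -mulmxA [X in v *m X](_ : _ = 0); last exact: h2.
  by rewrite mulmx0 scaler0 subrr.
- set e := xstar - x.
  have -> : xstar - (x + c *: (v *m (u^T *m e))) = e - c *: (v *m (u^T *m e)).
    by rewrite opprD addrA.
  apply/row_matrixP => i; rewrite row_mul rowK row0 mulmxBr -scalemxAr mulmxA.
  have [hi|hi] := ltnP i l.
    have h1 := Sp_row hS4 hi.
    have h2 : (A^T *m ws i)^T *m v = 0.
      by rewrite /v mulmxA -[X in _ *m X *m _]hS1 -trmx_mul (hS3 i hi) trmx0 mul0mx.
    rewrite [X in X - _](_ : _ = 0); last exact: h1.
    have h3 : (A^T *m ws i)^T *m (v *m u^T *m e) = 0.
      by rewrite -mulmxA mulmxA h2 mul0mx.
    rewrite [X in c *: X](_ : _ = 0); last exact: h3.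
    by rewrite scaler0 subr0.
  have -> : nat_of_ord i = l by apply/eqP; rewrite eqn_leq hi -ltnS ltn_ord.
  rewrite -/w -/u.
  have h3 : u^T *m (v *m u^T *m e) = den *: (u^T *m e).
    by rewrite -mulmxA mulmxA uv mul_scalar_mx.
  rewrite [X in c *: X](_ : _ = den *: (u^T *m e)); last exact: h3.
  by rewrite scalerA cd scale1r subrr.
- rewrite addrAC linearD linearZ /= trmx_mul; apply: addmx_sub.
    exact: submx_trans hS5 SS.
  apply: scalemx_sub; exact: submx_trans (submxMl _ _) vsub.
- rewrite opprD opprK addrA; apply: addmx_sub.
    exact: submx_trans hS6 SS.
  apply: scalemx_sub; exact: submx_trans (submxMl _ _) vsub.
Qed.


Lemma det_main (R : realType) n d (A : 'M[R]_(n,d)) b xstar (ws : nat -> 'cV[R]_n)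
  (Rw Vw : 'M[R]_d) x0 T :
  A *m xstar = b -> Vw *m Rw^T = 0 -> (Vw + Rw == A)%MS ->
  (forall l, ((A^T *m ws l)^T <= Rw)%MS) ->
  (Rw <= span_upto A ws T)%MS ->
  (A *m (rk_iter A b x0 ws T.+1).1 = b <-> orthproj Vw x0 = orthproj Vw xstar).
Proof.
move=> hb hV hVR hall hsub.
have [_ _ h4 h5 _] := @inv_all R n d A b xstar ws x0 hb T.+1.
move: h4 h5; set x := (rk_iter A b x0 ws T.+1).1 => h4 h5.
have hSpR : (Sp A ws T.+1 <= Rw)%MS by apply/row_subP => i; rewrite rowK; exact: hall.
have hsub' : (Rw <= Sp A ws T.+1)%MS := hsub.
set e := xstar - x.
have Re : Rw *m e = 0.
  have /submxP [D ->] := hsub'; by rewrite -mulmxA h4 mulmx0.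
have Vf : Vw *m (x - x0) = 0.
  have /submxP [D hD] := submx_trans h5 hSpR.
  by rewrite -[x - x0]trmxK hD trmx_mul mulmxA hV mul0mx.
have eq1 : A *m x = b <-> A *m e = 0.
  rewrite /e mulmxBr hb; split => [->|]; first by rewrite subrr.
  by move/eqP; rewrite subr_eq0 => /eqP <-.
have eq2 : orthproj Vw x0 = orthproj Vw xstar <-> Vw *m e = 0.
  have hx : xstar - x0 = e + (x - x0) by rewrite /e addrA subrK.
  have hV0 : Vw *m (xstar - x0) = Vw *m e by rewrite hx mulmxDr Vf addr0.
  have hop : orthproj Vw xstar - orthproj Vw x0 = orthproj Vw (xstar - x0).
    by rewrite /orthproj mulmxBr.
  split => h.
    by rewrite -hV0; apply/orthproj0; rewrite -hop h subrr.
  apply/eqP; rewrite eq_sym -subr_eq0 hop; apply/eqP/orthproj0.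
  by rewrite hV0.
rewrite eq1 eq2.
move/andP: hVR => [h1 h2].
move: h1; rewrite addsmx_sub => /andP [hVA _].
split => h.
  have /submxP [D ->] := hVA; by rewrite -mulmxA h mulmx0.
have /sub_addsmxP [u ->] := h2.
by rewrite mulmxDl -!mulmxA h Re !mulmx0 addr0.
Qed.

Unset Implicit Arguments. Set Strict Implicit.

Lemma meas_sub (R : realType) (dsp : measure_display) (Omega : measurableType dsp)
  n d (A : 'M[R]_(n, d)) (Rw : 'M[R]_d) (v : Omega -> 'cV[R]_n) :
  (forall i : 'I_n, measurable_fun setT (fun om => v om i 0)) ->
  measurable [set om | ((A^T *m v om)^T <= Rw)%MS].
Proof.
move=> mv.
set M := A *m cokermx Rw.
pose e (j : 'I_d) om := \sum_(i < n) v om i 0 * M i j.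
pose f om := \sum_(j < d) e j om ^+ 2.
have me : forall j, measurable_fun setT (e j).
  move=> j; apply: measurable_sum => i.
  by apply: measurable_funM => //; exact: measurable_cst.
have mf : measurable_fun setT f.
  by apply: measurable_sum => j; apply: measurable_funM; exact: me.
have -> : [set om | ((A^T *m v om)^T <= Rw)%MS] = f @^-1` [set 0].
  rewrite predeqE => om /=; rewrite submxE trmx_mul trmxK -mulmxA -/M.
  have hE : forall j, ((v om)^T *m M) 0 j = e j om.
    by move=> j; rewrite mxE; apply: eq_bigr => i _; rewrite mxE.
  split.
    move/eqP => h; rewrite /f big1 // => j _.
    by rewrite -hE h mxE expr2 mulr0.
  move=> h; apply/eqP/matrixP => i j; rewrite ord1 hE mxE.
  have := @psumr_eq0P R _ xpredT (fun j => e j om ^+ 2) (fun j _ => sqr_ge0 (e j om)) h j isT.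
  by move/eqP; rewrite sqrf_eq0 => /eqP.
by rewrite -[_ @^-1` _]setTI; apply: mf => //; exact: measurable_set1.
Qed.

Theorem mainTheorem6 (R : realType) (dsp : measure_display) (Omega : measurableType dsp)
  (P : probability Omega R) (n d : nat)
  (A : 'M[R]_(n, d)) (b : 'cV[R]_n) (xstar : 'cV[R]_d)
  (w : Omega -> 'cV[R]_n) (ws : nat -> Omega -> 'cV[R]_n)
  (Rw Vw : 'M[R]_d) (x0 : 'cV[R]_d) :
  A *m xstar = b ->
  (* w and the w_l are random variables in R^n *)
  (forall i : 'I_n, measurable_fun setT (fun om => w om i 0)) ->
  (forall (l : nat) (i : 'I_n), measurable_fun setT (fun om => ws l om i 0)) ->
  (* Rw represents R(w) = N(w)^perp, where
     N(w) = span {z | P[z'A'w = 0] = 1} *)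
  (forall y : 'cV[R]_d, (y^T <= Rw)%MS <->
     (forall z : 'cV[R]_d,
        P [set om | z^T *m A^T *m w om = 0] = 1%E -> z^T *m y = 0)) ->
  (* Vw is the subspace with Vw perp R(w) and Vw (+) R(w) = row(A) *)
  Vw *m Rw^T = 0 ->
  (Vw + Rw == A)%MS -> mxdirect (Vw + Rw) ->
  (* P[A' w_l in R(w)] = 1 for all l *)
  (forall l, P [set om | ((A^T *m ws l om)^T <= Rw)%MS] = 1%E) ->
  {ae P, forall om,
    forall T : nat,
      (* T = min {k >= 0 | span{A'w_0,...,A'w_k} contains R(w)} (and T < oo) *)
      (Rw <= span_upto A (fun l => ws l om) T)%MS ->
      (forall k, (k < T)%N -> ~~ (Rw <= span_upto A (fun l => ws l om) k)%MS) ->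
      (A *m (rk_iter A b x0 (fun l => ws l om) T.+1).1 = b <->
       orthproj Vw x0 = orthproj Vw xstar)}.
Proof.
move=> hb _ mws _ hV hVR _ hws.
have hl : forall l, {ae P, forall om, ((A^T *m ws l om)^T <= Rw)%MS}.
  move=> l; have mS := @meas_sub R dsp Omega n d A Rw (ws l) (mws l).
  exists (~` [set om | ((A^T *m ws l om)^T <= Rw)%MS]); split.
  - exact: measurableC.
  - by rewrite probability_setC // hws -EFinB subrr.
  - by [].
apply: filterS (ae_foralln hl) => om hall T hsub _.

exact (@det_main R n d A b xstar (ws^~ om) Rw Vw x0 T hb hV hVR hall hsub).
Qed.
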